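(* Let $n$ be a positive integer and $k$ an even integer with $n/2+1\le k\le n-1$. Then $H_{n,k}$ is a core.
   Context: $H_{n,k}$ is the graph whose vertices are the even-weight elements of $\mathbb{Z}_2^n$, with $x\sim y$ iff $x$ and $y$ differ in exactly $k$ coordinates. A graph is a core if every homomorphism (adjacency-preserving map) from it to itself is an automorphism. *)

(* Defs.v *)
From mathcomp Require Import all_boot.
Set Implicit Arguments. Unset Strict Implicit. Unset Printing Implicit Defensive.

Definition hweight (n : nat) (x : {ffun 'I_n -> bool}) : nat := #|[set i | x i]|.

Definition hdist (n : nat) (x y : {ffun 'I_n -> bool}) : nat :=
  #|[set i | x i != y i]|.

Definition even_vec (n : nat) : pred {ffun 'I_n -> bool} :=
  fun x => ~~ odd (@hweight n x).

Definition Hvert (n : nat) := {x : {ffun 'I_n -> bool} | @even_vec n x}.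

Definition Hadj (n k : nat) (x y : Hvert n) : bool := hdist (val x) (val y) == k.

Definition is_hom (T : finType) (e : rel T) (f : T -> T) : Prop :=
  forall x y, e x y -> e (f x) (f y).

Definition is_aut (T : finType) (e : rel T) (f : T -> T) : Prop :=
  bijective f /\ (forall x y, e x y = e (f x) (f y)).

Definition is_core (T : finType) (e : rel T) : Prop :=
  forall f : T -> T, is_hom e f -> is_aut e f.

(* Main.v *)
Require Import Defs.
From mathcomp Require Import all_boot all_order all_algebra.
From mathcomp Require Import zify ring lra.
Set Implicit Arguments. Unset Strict Implicit. Unset Printing Implicit Defensive.
Import Order.TTheory GRing.Theory Num.Theory.

Lemma binineq N i : i.+2 <= N -> ('C(N,i.+2) + 'C(N,i)) * N.+2 < 'C(N.+2, i.+2) * N.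
Proof.
move=> hiN.
have e1 := mul_bin_left N i.+1.
have e2 := mul_bin_left N i.
have hM : 0 < 'C(N, i.+1) by rewrite bin_gt0; lia.
rewrite !binS.
set A := 'C(N, i.+2) in e1 *; set M := 'C(N, i.+1) in e1 e2 hM *; set B := 'C(N, i) in e2 *.
have h1 : 2 * A <= (N - 1) * M by nia.
have h2 : 2 * B <= (N - 1) * M by nia.
nia.
Qed.

Lemma bin2E x : 'C(x,2) * 2 = x * x.-1.
Proof.
elim: x => [|x IH] //.
rewrite binS bin1 mulnDl IH.
case: x {IH} => [|x] //=. nia.
Qed.

Lemma bin_pred x : 'C(x.+1, x) = x.+1.
Proof. by rewrite -(bin_sub (leqnSn x)) subSnn bin1. Qed.

Lemma hA d n : (2 <= d)%N -> (d <= n)%N -> ('C(d,2) * n.+2 < 'C(n.+2,2) * d)%N.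
Proof.
move=> h1 h2.
rewrite -(ltn_pmul2r (_ : 0 < 2)%N) // mulnAC bin2E [X in (_ < X)%N]mulnAC bin2E.
have -> : (d * d.-1 * n.+2 = (d * n.+2) * d.-1)%N by rewrite mulnAC.
have -> : (n.+2 * n.+2.-1 * d = (d * n.+2) * n.+1)%N by rewrite /= mulnC mulnA.
rewrite ltn_pmul2l; [lia | by rewrite muln_gt0; lia].
Qed.
Lemma hB d m : (2 <= d)%N -> (m.+1 * (2 * m + d).+2 < 'C((2 * m + d).+2,2) * d)%N.
Proof.
move=> h1; set n := (2 * m + d)%N.
rewrite -(ltn_pmul2r (_ : 0 < 2)%N) // [X in (_ < X)%N]mulnAC bin2E /=.
have : (m.+1 * 2 < n.+1 * d)%N by rewrite /n; nia.
move=> h; have : (0 < n.+2)%N by []; nia.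
Qed.

Lemma hC d n : (2 <= d)%N -> (1 <= n)%N -> ((n + 'C(n,2) * d) * n.+2 < 'C(n.+2,2) * d * n)%N.
Proof.
move=> h1 h2.
have e1 := bin2E n; have e2 := bin2E n.+2.
case: n h2 e1 e2 => [|n] //= _ e1 e2.
set a := 'C(n.+1, 2) in e1 *; set b := 'C(n.+3, 2) in e2 *.
have h : ((n.+1 * 2 + a * 2 * d) * n.+3 < b * 2 * d * n.+1)%N.
  rewrite e1 e2; nia.
nia.
Qed.

Local Open Scope ring_scope.

Fixpoint cc (d m j : nat) : rat :=
  match m with
  | 0 => (-1) ^+ j * ('C(d, j))%:R
  | m'.+1 => cc d m' j - (if j is j'.+2 then cc d m' j' else 0)
  end.

Lemma cc_big d m j : (2 * m + d < j)%N -> cc d m j = 0.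
Proof.
elim: m j => [|m IH] j /= hj; first by rewrite bin_small ?mulr0 //; lia.
case: j hj => [|[|j]] hj; try lia.
rewrite !IH ?subr0 //; lia.
Qed.

Lemma cc_top d m : cc d m (2 * m + d) = (-1) ^+ (m + d).
Proof.
elim: m => [|m IH]; first by rewrite /= add0n binn mulr1.
have -> : (2 * m.+1 + d = (2 * m + d).+2)%N by lia.
rewrite [cc _ _.+1 _]/= IH cc_big; last lia.
by rewrite sub0r addSn exprS mulN1r.
Qed.

Lemma cc_0 d m : cc d m 0 = 1.
Proof. by elim: m => [|m IH] /=; rewrite ?IH ?subr0 // bin0 mulr1. Qed.

Lemma cc_1 d m : cc d m 1 = - (d%:R).
Proof. by elim: m => [|m IH] /=; rewrite ?IH ?subr0 // bin1 expr1 mulN1r. Qed.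

Lemma cc_2 d m : cc d m 2 = ('C(d,2))%:R - m%:R.
Proof.
elim: m => [|m IH] /=; first by rewrite expr2 mulrNN mul1r subr0.
by rewrite IH cc_0 -addrA -opprD -(natrD _ m 1) addn1.
Qed.

Lemma absle (c : rat) (N B : nat) : (`|c| * N%:R <= B%:R) = (- B%:R <= c * N%:R <= B%:R).
Proof. by rewrite -[N%:R]normr_nat -normrM normr_nat ler_norml. Qed.
Lemma abslt (c : rat) (N B : nat) : (`|c| * N%:R < B%:R) = (- B%:R < c * N%:R < B%:R).
Proof. by rewrite -[N%:R]normr_nat -normrM normr_nat ltr_norml. Qed.

Lemma sign_bounds k : -1 <= (-1) ^+ k :> rat /\ (-1) ^+ k <= 1 :> rat.
Proof. rewrite -signr_odd; case: (odd k); rewrite ?expr0 ?expr1; lra. Qed.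

Lemma ccS d m j : cc d m.+1 j.+2 = cc d m j.+2 - cc d m j.
Proof. by []. Qed.

Lemma divlt (y B N : rat) : 0 < N -> y * N < B * N -> y < B.
Proof. by move=> hN; rewrite ltr_pM2r. Qed.

Lemma cc_bound d m : (2 <= d)%N ->
  (forall j, (0 < j < 2 * m + d)%N -> `|cc d m j| * (2 * m + d)%:R <= ('C(2 * m + d, j) * d)%:R) /\
  ((0 < m)%N -> forall j, (1 < j < (2 * m + d).-1)%N ->
     `|cc d m j| * (2 * m + d)%:R < ('C(2 * m + d, j) * d)%:R).
Proof.
move=> hd; elim: m => [|m [IH _]].
  split => // j _; rewrite /= normrM normrX normrN1 expr1n mul1r normr_nat.
  by rewrite add0n natrM.
have hBm := hB m hd.
have -> : (2 * m.+1 + d = (2 * m + d).+2)%N by lia.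
set n := (2 * m + d)%N in IH hBm *.
have ndef : n = (2 * m + d)%N by [].
clearbody n.
have hn : (2 <= n)%N by rewrite ndef; lia.
have hnpos : (0 : rat) < n%:R by rewrite ltr0n; lia.
have strict : forall j, (1 < j < n.+1)%N ->
     `|cc d m.+1 j| * n.+2%:R < ('C(n.+2, j) * d)%:R.
  move=> j /andP [hj1 hj2].
  case: (ltngtP j 2) => [|hj3|->]; first lia.
  - have [ejn|ejn] : j = n \/ (j < n)%N by lia.
    +
      subst j.
      have e : n = (n - 2)%N.+2 by lia.
      have ccn : cc d m.+1 n = (-1) ^+ (m + d) - cc d m (n - 2)%N.
        by rewrite [in LHS]e ccS -e ndef cc_top.
      rewrite ccn abslt natrM.
      have := IH (n - 2)%N ltac:(lia); rewrite bin_sub // absle.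
      have -> : 'C(n.+2, n) = 'C(n.+2, 2).
        by have := @bin_sub n.+2 2 isT; rewrite !subSS subn0.
      have hc := hC hd (_ : 1 <= n)%N; have {hc}hc := hc ltac:(lia).
      move: hc; rewrite -(ltr_nat rat) !natrM natrD natrM => hc.
      have [s1 s2] := sign_bounds (m + d).
      move=> /andP [hx1 hx2].
      set s := (-1) ^+ (m + d) in s1 s2 *.
      set x := cc d m (n - 2)%N in hx1 hx2 *.
      set C2 := ('C(n, 2))%:R in hx1 hx2 hc *.
      set C2' := ('C(n.+2, 2))%:R in hc *.
      have hsn1 : s * n%:R <= n%:R by nra.
      have hsn2 : - n%:R <= s * n%:R by nra.
      have hN2 : (0 : rat) < n.+2%:R by rewrite ltr0n.
      apply/andP; split.
      * apply: (@divlt _ _ n%:R) => //.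
        rewrite -[n.+2]addn2 natrD in hN2 *; nra.
      * apply: (@divlt _ _ n%:R) => //.
        rewrite -[n.+2]addn2 natrD in hN2 *; nra.
    +
      have e : j = (j - 2)%N.+2 by lia.
      rewrite e ccS -e.
      have := IH j ltac:(lia); have := IH (j - 2)%N ltac:(lia).
      rewrite !absle => /andP [hy1 hy2] /andP [hx1 hx2].
      have hb := binineq (_ : (j - 2)%N.+2 <= n)%N; have {hb} hb := hb ltac:(lia).
      rewrite -e in hb.
      move: hb; rewrite -(ltr_nat rat) !natrM natrD => hb.
      rewrite -natrM abslt natrM.
      rewrite !natrM in hx1 hx2 hy1 hy2.
      set C' := ('C(n.+2, j))%:R in hb *.
      rewrite -[n.+2]addn2 natrD in hb *.
      set x1 := cc d m j in hx1 hx2 *; set x2 := cc d m (j - 2)%N in hy1 hy2 *.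
      set Cj := ('C(n, j))%:R in hx1 hx2 hb *.
      set Cj2 := ('C(n, (j - 2)%N))%:R in hy1 hy2 hb *.
      set D := (d%:R : rat) in hx1 hx2 hy1 hy2 *.
      set N := (n%:R : rat) in hnpos hx1 hx2 hy1 hy2 hb *.
      have hD : 0 < D by rewrite /D ltr0n; lia.
      have hN2 : 0 < N + 2%:R by lra.
      have h3 : (Cj + Cj2) * (N + 2%:R) * D < C' * N * D by rewrite ltr_pM2r.
      apply/andP; split.
      * apply: (@divlt _ _ N) => //.
        have h1 : - ((Cj + Cj2) * D) <= (x1 - x2) * N by lra.
        have h2 : - ((Cj + Cj2) * D) * (N + 2%:R) <= (x1 - x2) * N * (N + 2%:R).
          by rewrite ler_pM2r.
        nra.
      * apply: (@divlt _ _ N) => //.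
        have h1 : (x1 - x2) * N <= (Cj + Cj2) * D by lra.
        have h2 : (x1 - x2) * N * (N + 2%:R) <= (Cj + Cj2) * D * (N + 2%:R).
          by rewrite ler_pM2r.
        nra.
  - rewrite cc_2 abslt mulrBl -!natrM.
    have hA' := hA hd (_ : d <= n)%N; have {hA'} hA' := hA' ltac:(rewrite ndef; lia).
    move: hA' hBm; rewrite -!(ltr_nat rat) => h1 h2.
    have p1 : 0 <= ('C(d,2) * n.+2)%:R :> rat := ler0n _ _.
    have p2 : 0 <= (m.+1 * n.+2)%:R :> rat := ler0n _ _.
    apply/andP; split; lra.
split.
  move=> j hj.
  case: (ltngtP j 1) => [|hj1|->]; first lia.
  - case: (ltngtP j n.+1) => [hj2|hj2|->]; last first.
    + have ccn : cc d m.+1 n.+1 = - cc d m (n - 1)%N.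
        have e : n.+1 = (n - 1)%N.+2 by lia.
        rewrite [in LHS]e ccS -e cc_big ?sub0r //; rewrite ndef; lia.
      rewrite ccn normrN bin_pred natrM [X in _ <= X]mulrC.
      have := IH (n - 1)%N ltac:(lia).
      have -> : 'C(n, (n - 1)%N) = n by rewrite bin_sub ?bin1 //; lia.
      rewrite natrM [X in _ <= X]mulrC ler_pM2r // => hx.
      by rewrite ler_wpM2r.
    + lia.
    + exact: ltW (strict j ltac:(lia)).
  by rewrite cc_1 normrN normr_nat bin1 natrM mulrC.
move=> _ j hj; apply: strict; lia.
Qed.

Local Open Scope ring_scope.

Lemma coef_lin (c : rat) d j : ((1 + c *: 'X)^+d)`_j = c ^+ j * ('C(d,j))%:R.
Proof.
elim: d j => [|d IH] j.
  by rewrite expr0 coef1; case: j => [|j]; rewrite ?expr0 ?mul1r // bin0n mulr0.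
rewrite exprS mulrDl mul1r coefD -scalerAl coefZ coefXM.
case: j => [|j]; first by rewrite /= mulr0 addr0 IH !expr0 !bin0.
by rewrite /= !IH binS natrD mulrDr exprS mulrA.
Qed.

Section Fourier.
Variable n : nat.
Local Notation X := {ffun 'I_n -> bool}.

Definition addv (x y : X) : X := [ffun i => x i (+) y i].
Definition zerov : X := [ffun => false].
Definition onesv : X := [ffun => true].
Definition ev (j : 'I_n) : X := [ffun i => i == j].
Definition wt (x : X) := #|[set i | x i]|.
Definition chi (u x : X) : rat := \prod_i (if u i && x i then -1 else 1).

Lemma addvC x y : addv x y = addv y x.
Proof. by apply/ffunP => i; rewrite !ffunE addbC. Qed.
Lemma addvA x y z : addv x (addv y z) = addv (addv x y) z.
Proof. by apply/ffunP => i; rewrite !ffunE addbA. Qed.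
Lemma addvv x : addv x x = zerov.
Proof. by apply/ffunP => i; rewrite !ffunE addbb. Qed.
Lemma addv0 x : addv x zerov = x.
Proof. by apply/ffunP => i; rewrite !ffunE addbF. Qed.
Lemma add0v x : addv zerov x = x.
Proof. by rewrite addvC addv0. Qed.
Lemma addKv x y : addv x (addv x y) = y.
Proof. by rewrite addvA addvv add0v. Qed.
Lemma addv_inj x : injective (addv x).
Proof. by move=> y z e; rewrite -(addKv x y) e addKv. Qed.
Lemma addv_eq0 x y : (addv x y == zerov) = (x == y).
Proof.
apply/eqP/eqP => [e|->]; last exact: addvv.
by rewrite -(addKv x y) e addv0.
Qed.

Lemma chiC u x : chi u x = chi x u.
Proof. by apply: eq_bigr => i _; rewrite andbC. Qed.

Lemma chiD u x y : chi u (addv x y) = chi u x * chi u y.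
Proof.
rewrite /chi -big_split; apply: eq_bigr => i _ /=; rewrite ffunE.
by case: (u i); case: (x i); case: (y i); rewrite /= ?mulN1r ?opprK ?mul1r ?mulr1.
Qed.

Lemma chiDl u v x : chi (addv u v) x = chi u x * chi v x.
Proof. by rewrite chiC chiD !(chiC x). Qed.

Lemma chi0 u : chi u zerov = 1.
Proof. by rewrite /chi big1 // => i _; rewrite ffunE andbF. Qed.

Lemma chi_sq u x : chi u x * chi u x = 1.
Proof. by rewrite -chiD addvv chi0. Qed.

Lemma chi_ones u : chi u onesv = (-1) ^+ wt u.
Proof.
rewrite /chi /wt cardsE -prodr_const [in RHS]big_mkcond /=.
by apply: eq_bigr => i _; rewrite ffunE andbT.
Qed.

Lemma chi_ev j x : chi (ev j) x = if x j then -1 else 1.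
Proof.
rewrite /chi (bigD1 j) //= ffunE eqxx /= big1 ?mulr1 // => i /negbTE hij.
by rewrite ffunE hij.
Qed.

Lemma card_X : #|X| = (2 ^ n)%N.
Proof. by rewrite card_ffun card_bool card_ord. Qed.

Lemma sum_chi v : \sum_u chi u v = (2 ^ n)%:R * (v == zerov)%:R.
Proof.
rewrite /chi -(bigA_distr_bigA (fun i (b : bool) => if b && v i then -1 else 1 : rat)).
have -> : \prod_(i : 'I_n) \sum_(b : bool) (if b && v i then -1 else 1 : rat)
          = \prod_(i : 'I_n) (if v i then 0 else 2).
  apply: eq_bigr => i _; rewrite big_bool /=.
  by case: (v i); rewrite ?subrr.
case: eqP => [->|/eqP hv].
  by rewrite mulr1 (eq_bigr (fun _ => 2)) ?prodr_const ?card_ord ?natrX // => i _; rewrite ffunE.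
have [i hi] : exists i, v i.
  apply/existsP; apply: contraR hv => /existsPn h.
  by apply/eqP/ffunP => i; rewrite ffunE; apply/negbTE/h.
by rewrite mulr0 (bigD1 i) //= hi mul0r.
Qed.

Definition hat (g : X -> rat) (u : X) : rat := \sum_x g x * chi u x.

Lemma hat_inv (g : X -> rat) z : \sum_u hat g u * chi u z = (2 ^ n)%:R * g z.
Proof.
rewrite /hat.
transitivity (\sum_x g x * \sum_u chi u (addv x z)).
  rewrite (eq_bigr (fun u => \sum_x g x * chi u x * chi u z)); last first.
    by move=> u _; rewrite mulr_suml.
  rewrite exchange_big /=; apply: eq_bigr => x _.
  by rewrite mulr_sumr; apply: eq_bigr => u _; rewrite chiD mulrA.
rewrite (bigD1 z) //= addvv sum_chi eqxx mulr1 big1 ?addr0 1?mulrC //.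
move=> x hx; rewrite sum_chi.
by rewrite addv_eq0 (negbTE hx) mulr0 mulr0.
Qed.

Lemma hat_parseval (g : X -> rat) s :
  \sum_u hat g u * hat g u * chi u s = (2 ^ n)%:R * \sum_x g x * g (addv x s).
Proof.
rewrite /hat.
transitivity (\sum_u \sum_x \sum_y g x * g y * (chi u x * chi u y * chi u s)).
  apply: eq_bigr => u _; rewrite mulr_suml mulr_suml; apply: eq_bigr => x _.
  rewrite mulr_sumr mulr_suml; apply: eq_bigr => y _; ring.
transitivity (\sum_x \sum_y g x * g y * \sum_u chi u (addv (addv x y) s)).
  rewrite exchange_big /=; apply: eq_bigr => x _.
  rewrite exchange_big /=; apply: eq_bigr => y _.
  by rewrite mulr_sumr; apply: eq_bigr => u _; rewrite !chiD.
rewrite mulr_sumr; apply: eq_bigr => x _.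
rewrite (bigD1 (addv x s)) //= addKv addvv sum_chi eqxx mulr1 big1 ?addr0 1?mulrC //.
move=> y hy; rewrite sum_chi.
have -> : (addv (addv x y) s == zerov) = false.
  apply/negbTE; apply: contra hy; rewrite addv_eq0 => /eqP <-.
  by rewrite addKv.
by rewrite !mulr0.
Qed.

End Fourier.
Arguments zerov {n}.
Arguments onesv {n}.

Local Open Scope ring_scope.

Section Eig.
Variable n : nat.
Local Notation X := {ffun 'I_n -> bool}.

Definition sg (b : bool) : rat := if b then -1 else 1.

Lemma prod_if (u s : X) :
  \prod_i (if s i then sg (u i) *: 'X else 1) = chi u s *: 'X^(wt s) :> {poly rat}.
Proof.
rewrite -big_mkcond /=.
rewrite (eq_bigr (fun i : 'I_n => (sg (u i))%:P * 'X)); last by move=> i _; rewrite mul_polyC.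
rewrite big_split /= -rmorph_prod prodr_const -mul_polyC /wt cardsE.
congr (_%:P * _); rewrite /chi big_mkcond /=.
by apply: eq_bigr => i _; rewrite /sg; case: (s i); case: (u i).
Qed.

Lemma gen_poly (u : X) :
  \sum_s chi u s *: 'X^(wt s) = (1 - 'X)^+(wt u) * (1 + 'X)^+(n - wt u) :> {poly rat}.
Proof.
rewrite (eq_bigr (fun s : X => \prod_i (if s i then sg (u i) *: 'X else 1))); last first.
  by move=> s _; rewrite prod_if.
rewrite -(bigA_distr_bigA (fun i (b : bool) => if b then sg (u i) *: 'X else 1 : {poly rat})).
rewrite (eq_bigr (fun i : 'I_n => if u i then 1 - 'X else 1 + 'X)); last first.
  by move=> i _; rewrite big_bool /= /sg; case: (u i); rewrite ?scaleN1r ?scale1r addrC.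
rewrite (bigID (fun i => u i)) /=.
rewrite (eq_bigr (fun _ : 'I_n => 1 - 'X)); last by move=> i ->.
rewrite [X in _ * X](eq_bigr (fun _ : 'I_n => 1 + 'X)); last by move=> i /negbTE ->.
rewrite !prodr_const /wt cardsE; congr (_ * _ ^+ _).
have h := cardC (fun i : 'I_n => u i); rewrite card_ord in h.
by rewrite -[X in (X - _)%N]h addKn; apply: eq_card => i.
Qed.

Lemma lam_coef (u : X) k :
  \sum_(s | wt s == k) chi u s = ((1 - 'X)^+(wt u) * (1 + 'X)^+(n - wt u))`_k.
Proof. by rewrite -gen_poly coef_sumMXn. Qed.

Lemma count_wt j : (#|[pred s : X | wt s == j]|)%:R = ('C(n, j))%:R :> rat.
Proof.
have h := lam_coef (zerov : X) j.
have e : wt (zerov : X) = 0%N.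
  by rewrite /wt; apply/eqP; rewrite cards_eq0; apply/eqP/setP => i; rewrite !inE ffunE.
rewrite e expr0 mul1r subn0 in h.
rewrite (eq_bigr (fun _ : X => 1)) in h; last by move=> s _; rewrite chiC chi0.
rewrite sumr_const in h.
have h2 := coef_lin 1 n j; rewrite scale1r expr1n mul1r in h2.
by rewrite -h2 -h.
Qed.

Definition lam k (u : X) := \sum_(s : X | wt s == k) chi u s.
Definition Kp k j := (((1 - 'X)^+j * (1 + 'X)^+(n - j) : {poly rat}))`_k.

Lemma sum_const_wt j (c : rat) : \sum_(u : X | wt u == j) c = ('C(n,j))%:R * c.
Proof.
rewrite sumr_const mulr_natl; congr (_ *+ _).
by apply/eqP; rewrite -(eqr_nat rat); apply/eqP; exact: count_wt.
Qed.

Lemma dual j k : ('C(n,j))%:R * Kp k j = ('C(n,k))%:R * Kp j k.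
Proof.
transitivity (\sum_(u : X | wt u == j) \sum_(s : X | wt s == k) chi u s).
  rewrite -sum_const_wt; apply: eq_bigr => u /eqP hu.
  by rewrite lam_coef hu.
rewrite exchange_big /= -sum_const_wt; apply: eq_bigr => s /eqP hs.
rewrite (eq_bigr (fun u : X => chi s u)); last by move=> u _; rewrite chiC.
by rewrite lam_coef hs.
Qed.

End Eig.

Lemma coef_cc d m j : (((1 - 'X^2)^+m * (1 - 'X)^+d : {poly rat}))`_j = cc d m j.
Proof.
elim: m j => [|m IH] j.
  rewrite expr0 mul1r /= -scaleN1r.
  by have := coef_lin (-1) d j.
rewrite exprS -mulrA mulrBl mul1r coefB coefXnM IH.
case: j => [|[|j]] //=; rewrite ?subr0 //.
by rewrite subSS subSS subn0 IH.
Qed.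


Section Bound.
Variables n k : nat.
Hypotheses (hn : (0 < n)%N) (hk : ~~ odd k) (hk1 : (n + 2 <= 2 * k)%N) (hk2 : (k <= n - 1)%N).
Local Notation X := {ffun 'I_n -> bool}.

Definition tau : rat := - (('C(n,k))%:R * (k - (n - k))%N%:R) / n%:R.

Lemma poly_split :
  ((1 - 'X)^+k * (1 + 'X)^+(n - k) : {poly rat}) =
  (1 - 'X^2)^+(n - k) * (1 - 'X)^+(k - (n - k)).
Proof.
set a := (n - k)%N; set b := (k - a)%N.
have -> : k = (b + a)%N by rewrite /b /a; lia.
rewrite exprD -mulrA -exprMn mulrC.
congr (_ * _); congr (_ ^+ _).
by rewrite mulrBl mul1r mulrDr mulr1 opprD addrA addrK expr2.
Qed.

Lemma lam_formula (u : X) :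
  ('C(n, wt u))%:R * lam k u = ('C(n,k))%:R * cc (k - (n - k)) (n - k) (wt u).
Proof. by rewrite /lam lam_coef -/(Kp _ _ _) dual /Kp poly_split coef_cc. Qed.

Lemma wt_le (u : X) : (wt u <= n)%N.
Proof. by rewrite /wt -[X in (_ <= X)%N](card_ord n) max_card. Qed.

Lemma tau_neg : tau < 0.
Proof.
rewrite /tau mulNr oppr_lt0; apply: divr_gt0; last by rewrite ltr0n.
by apply: mulr_gt0; rewrite ltr0n ?bin_gt0; lia.
Qed.

Lemma lam_bounds (u : X) :
  tau <= lam k u /\ (wt u != 1%N -> wt u != n.-1 -> tau < lam k u).
Proof.
set m := (n - k)%N; set d := (k - m)%N.
have hnd : n = (2 * m + d)%N by rewrite /d /m; lia.
have hd : (2 <= d)%N by rewrite /d /m; lia.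
have hm : (0 < m)%N by rewrite /m; lia.
have hf := lam_formula u; rewrite -/m -/d in hf.
have hj := wt_le u.
set j := wt u in hf hj *.
set L := lam k u in hf *.
have hCk : (0 : rat) < ('C(n,k))%:R by rewrite ltr0n bin_gt0; lia.
have hCj : (0 : rat) < ('C(n,j))%:R by rewrite ltr0n bin_gt0.
have hnr : (0 : rat) < n%:R by rewrite ltr0n.
have htn : tau * n%:R = - (('C(n,k))%:R * d%:R).
  have hn0 : n%:R != 0 :> rat by rewrite pnatr_eq0 -lt0n.
  by rewrite /tau -/m -/d divfK.
have [e0|ne0] := eqVneq j 0%N.
  move: hf; rewrite e0 cc_0 bin0 mul1r mulr1 => ->.
  have hpos : tau < ('C(n,k))%:R := lt_trans tau_neg hCk.
  by split; [exact: ltW | move=> _ _].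
have [en|nen] := eqVneq j n.
  move: hf; rewrite en binn mul1r {2}hnd cc_top.
  have -> : (m + d = k)%N by rewrite /d /m; lia.
  rewrite -signr_odd (negbTE hk) expr0 mulr1 => ->.
  have hpos : tau < ('C(n,k))%:R := lt_trans tau_neg hCk.
  by split; [exact: ltW | move=> _ _].
have [hb1 hb2] := cc_bound m hd.
have key : forall c : rat, - ((('C(n,j)) * d)%N%:R) <= c * n%:R ->
    ('C(n,j))%:R * L = ('C(n,k))%:R * c -> tau <= L.
  move=> c hc hL.
  rewrite -(ler_pM2r (_ : 0 < n%:R * ('C(n,j))%:R)); last by rewrite mulr_gt0.
  rewrite mulrA htn.
  have e : L * (n%:R * ('C(n,j))%:R) = ('C(n,k))%:R * c * n%:R.
    by rewrite mulrCA mulrC [L * _]mulrC hL.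
  rewrite e; rewrite natrM in hc; nra.
have keys : forall c : rat, - ((('C(n,j)) * d)%N%:R) < c * n%:R ->
    ('C(n,j))%:R * L = ('C(n,k))%:R * c -> tau < L.
  move=> c hc hL.
  rewrite -(ltr_pM2r (_ : 0 < n%:R * ('C(n,j))%:R)); last by rewrite mulr_gt0.
  rewrite mulrA htn.
  have e : L * (n%:R * ('C(n,j))%:R) = ('C(n,k))%:R * c * n%:R.
    by rewrite mulrCA mulrC [L * _]mulrC hL.
  rewrite e; rewrite natrM in hc; nra.
have hj0 : (0 < j < 2 * m + d)%N by rewrite -hnd; lia.
split.
  apply: (key _ _ hf).
  by have := hb1 j hj0; rewrite -hnd absle => /andP [].
move=> h1 h2; apply: (keys _ _ hf).
have hj1 : (1 < j < (2 * m + d).-1)%N by rewrite -hnd; move: h1 h2 hj0; lia.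
by have := hb2 hm j hj1; rewrite -hnd abslt => /andP [].
Qed.

End Bound.

Local Open Scope ring_scope.

Section Comb.
Variable n : nat.
Local Notation X := {ffun 'I_n -> bool}.

Lemma odd_wtD (x y : X) : odd (wt (addv x y)) = odd (wt x) (+) odd (wt y).
Proof.
have h : (-1) ^+ wt (addv x y) = (-1) ^+ wt x * (-1) ^+ wt y :> rat.
  by rewrite -!chi_ones !(chiC _ onesv) chiD.
rewrite -exprD -signr_odd -[in X in _ = X]signr_odd in h.
by rewrite -oddD; apply: (signr_inj (R := rat)).
Qed.

Lemma wt0 : wt (zerov : X) = 0%N.
Proof. by rewrite /wt; apply/eqP; rewrite cards_eq0; apply/eqP/setP => i; rewrite !inE ffunE. Qed.

Lemma wt_eq0 (x : X) : wt x = 0%N -> x = zerov.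
Proof.
move=> /eqP; rewrite /wt cards_eq0 => /eqP h; apply/ffunP => i.
by move/setP: h => /(_ i); rewrite !inE ffunE.
Qed.

Lemma wt_ev (j : 'I_n) : wt (ev j) = 1%N.
Proof.
rewrite /wt (_ : [set i | ev j i] = [set j]) ?cards1 //.
by apply/setP => i; rewrite !inE ffunE.
Qed.

Lemma ev_inj : injective (@ev n).
Proof. by move=> j l e; have := congr1 (fun f : X => f j) e; rewrite !ffunE eqxx => /esym/eqP. Qed.

Lemma wt_compl (v : X) : wt (addv onesv v) = (n - wt v)%N.
Proof.
have h := cardsC [set i | v i]; rewrite card_ord in h.
rewrite /wt (_ : [set i | addv onesv v i] = ~: [set i | v i]); first lia.
by apply/setP => i; rewrite !inE !ffunE.
Qed.

Lemma addv_onesK : involutive (addv (@onesv n)).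
Proof. exact: addKv. Qed.

Lemma sum_chi_ev (z : X) : \sum_i chi (ev i) z = n%:R - 2 * (wt z)%:R.
Proof.
rewrite (eq_bigr (fun i => if z i then -1 else 1)); last by move=> i _; rewrite chi_ev.
rewrite (bigID (fun i => z i)) /=.
rewrite (eq_bigr (fun _ => -1)); last by move=> i ->.
rewrite [X in _ + X](eq_bigr (fun _ => 1)); last by move=> i /negbTE ->.
rewrite !sumr_const.
have h := cardC (fun i : 'I_n => z i); rewrite card_ord in h.
have e1 : #|(fun i : 'I_n => z i)| = wt z by rewrite /wt cardsE.
have e2 : #|[pred i : 'I_n | ~~ z i]| = (n - wt z)%N.
  by rewrite -e1 -[X in (X - _)%N]h addKn; apply: eq_card.
transitivity (- (wt z)%:R + (n - wt z)%:R : rat).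
  congr (_ + _); [by rewrite /wt cardsE mulNrn | by congr (_%:R); exact: e2].
rewrite natrB ?wt_le //; ring.
Qed.

Lemma sum_wt1 (G : X -> rat) : \sum_(u | wt u == 1%N) G u = \sum_j G (ev j).
Proof.
have -> : \sum_(u | wt u == 1%N) G u = \sum_(u in [set ev j | j in [set: 'I_n]]) G u.
  apply: eq_bigl => u; apply/idP/imsetP => [/cards1P [j hj]|[j _ ->]].
    exists j; rewrite ?inE //; apply/ffunP => i; rewrite ffunE.
    by move/setP: hj => /(_ i); rewrite !inE.
  by rewrite wt_ev.
rewrite big_imset /=; last by move=> j l _ _; apply: ev_inj.
by apply: eq_bigl => j; rewrite inE.
Qed.

Lemma sum_wtn1 (G : X -> rat) : (2 <= n)%N ->
  \sum_(u | wt u == n.-1) G u = \sum_j G (addv onesv (ev j)).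
Proof.
move=> hn.
rewrite (reindex_inj (can_inj addv_onesK)) /=.
rewrite -(sum_wt1 (fun v => G (addv onesv v))); apply: eq_bigl => v.
rewrite wt_compl.
have := wt_le v; lia.
Qed.


Lemma all_one (k : nat) (D : 'I_n -> rat) : (0 < k)%N -> (k <= n - 1)%N ->
  \sum_j D j = n%:R ->
  (forall s : X, wt s = k -> \sum_j D j * chi (ev j) s = n%:R - 2 * k%:R) ->
  forall j, D j = 1.
Proof.
move=> hk0 hk1 hsum hs.
have key : forall s : X, wt s = k -> \sum_(j | s j) D j = k%:R.
  move=> s hw; have := hs s hw.
  rewrite (eq_bigr (fun j => D j - (if s j then 2 * D j else 0))); last first.
    by move=> j _; rewrite chi_ev; case: (s j); ring.
  rewrite sumrB hsum -big_mkcond /= -mulr_sumr => h; lra.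
have eqD : forall p q, D p = D q.
  move=> p q; have [->//|hpq] := eqVneq p q.
  set A := [set~ p] :\ q.
  have hA : (k.-1 <= #|A|)%N.
    have := cardsD1 q [set~ p]; rewrite !inE eq_sym hpq /= cardsC1 card_ord.
    rewrite -/A; lia.
  have /card_geqP [t [ut st sub]] := hA.
  have hp : p \notin t by apply/negP => /sub; rewrite !inE eqxx andbF.
  have hq : q \notin t by apply/negP => /sub; rewrite !inE eqxx.
  have gen : forall a : 'I_n, a \notin t ->
      let sa : X := [ffun i => (i == a) || (i \in t)] in
      wt sa = k /\ \sum_(j | sa j) D j = D a + \sum_(j in t) D j.
    move=> a ha sa; split.
      rewrite /wt (_ : [set i | sa i] = a |: [set i in t]).
        by rewrite cardsU1 inE ha cardsE (card_uniqP ut) st; lia.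
      by apply/setP => i; rewrite !inE ffunE.
    rewrite (bigD1 a) /=; last by rewrite ffunE eqxx.
    congr (_ + _); apply: eq_bigl => i; rewrite ffunE.
    by case: (eqVneq i a) => [->|] /=; rewrite ?(negbTE ha) ?andbT.
  have [wp sp] := gen p hp; have [wq sq] := gen q hq.
  have := key _ wp; have := key _ wq; rewrite sp sq; lra.
move=> j.
have : \sum_i D i = n%:R * D j.
  by rewrite (eq_bigr (fun _ => D j)) ?sumr_const ?card_ord ?mulr_natl // => i _; apply: eqD.
rewrite hsum => h.
have hn0 : n%:R != 0 :> rat by rewrite pnatr_eq0; lia.
by apply: (mulfI hn0); rewrite mulr1.
Qed.

End Comb.

Local Open Scope ring_scope.

Lemma hdistE n (a b : {ffun 'I_n -> bool}) : hdist a b = wt (addv a b).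
Proof.
rewrite /hdist /wt (_ : [set i | a i != b i] = [set i | addv a b i]) //.
by apply/setP => i; rewrite !inE ffunE; case: (a i); case: (b i).
Qed.

Lemma hdist_refl n (a : {ffun 'I_n -> bool}) : hdist a a = 0%N.
Proof. by rewrite hdistE addvv wt0. Qed.

Section Iso.
Variables n k : nat.
Hypotheses (hn : (0 < n)%N) (hk : ~~ odd k) (hk1 : (n + 2 <= 2 * k)%N) (hk2 : (k <= n - 1)%N).
Local Notation X := {ffun 'I_n -> bool}.
Variable f : Hvert n -> Hvert n.
Hypothesis hf : is_hom (@Hadj n k) f.

Let i0 : 'I_n := Ordinal hn.

Lemma even0 : even_vec (zerov : X).
Proof. by rewrite /even_vec /hweight -/(wt _) wt0. Qed.

Let v0 : Hvert n := exist _ zerov even0.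

Definition pi (x : X) : Hvert n := insubd v0 (if odd (wt x) then addv x (ev i0) else x).

Lemma piE x : val (pi x) = (if odd (wt x) then addv x (ev i0) else x).
Proof.
rewrite /pi insubdK //; case: ifP => h; rewrite unfold_in /=.
  by change (~~ odd (wt (addv x (ev i0)))); rewrite odd_wtD wt_ev h.
by change (~~ odd (wt x)); rewrite h.
Qed.

Lemma pival (x' : Hvert n) : pi (val x') = x'.
Proof.
apply: val_inj; rewrite piE; case: x' => x hx /=.
by move: hx; rewrite /even_vec /hweight -/(wt _) => /negbTE ->.
Qed.

Definition F (x : X) : X := val (f (pi x)).

Lemma homF (x s : X) : wt s = k -> hdist (F x) (F (addv x s)) = k.
Proof.
move=> hs.
have h : Hadj k (pi x) (pi (addv x s)).
  rewrite /Hadj !piE hdistE odd_wtD hs (negbTE hk) addbF.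
  apply/eqP; rewrite -hs; congr wt; apply/ffunP => i; rewrite !ffunE.
  by case: (odd (wt x)); rewrite !ffunE //; case: (x i); case: (s i); case: (i == i0).
by have /eqP := hf h.
Qed.

Definition g (i : 'I_n) (x : X) : rat := chi (ev i) (F x).

Lemma gsum x y : \sum_i g i x * g i y = n%:R - 2 * (hdist (F x) (F y))%:R.
Proof. by rewrite hdistE -sum_chi_ev; apply: eq_bigr => i _; rewrite /g chiD. Qed.


Lemma sq_sum (i : 'I_n) : \sum_u hat (g i) u * hat (g i) u = (2 ^ n)%:R * (2 ^ n)%:R.
Proof.
rewrite (eq_bigr (fun u : X => hat (g i) u * hat (g i) u * chi u zerov)); last first.
  by move=> u _; rewrite chi0 mulr1.
rewrite hat_parseval; congr (_ * _).
rewrite (eq_bigr (fun _ : X => 1)); last by move=> x _; rewrite addv0 /g chi_sq.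
by rewrite sumr_const card_X.
Qed.

Lemma lam_sum (i : 'I_n) : \sum_u hat (g i) u * hat (g i) u * lam k u =
  (2 ^ n)%:R * \sum_(s : X | wt s == k) \sum_x g i x * g i (addv x s).
Proof.
rewrite /lam (eq_bigr (fun u : X => \sum_(s : X | wt s == k) hat (g i) u * hat (g i) u * chi u s)); last first.
  by move=> u _; rewrite mulr_sumr.
rewrite exchange_big /= mulr_sumr; apply: eq_bigr => s _.
by rewrite hat_parseval.
Qed.

Lemma total : \sum_i \sum_u hat (g i) u * hat (g i) u * (lam k u - tau n k) = 0.
Proof.
transitivity (\sum_i ((2 ^ n)%:R * \sum_(s : X | wt s == k) \sum_x g i x * g i (addv x s)
                     - tau n k * ((2 ^ n)%:R * (2 ^ n)%:R))).
  apply: eq_bigr => i _.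
  rewrite (eq_bigr (fun u : X => hat (g i) u * hat (g i) u * lam k u - tau n k * (hat (g i) u * hat (g i) u))); last first.
    by move=> u _; ring.
  by rewrite sumrB lam_sum -mulr_sumr sq_sum.
rewrite sumrB -mulr_sumr.
have e : \sum_i \sum_(s : X | wt s == k) \sum_x g i x * g i (addv x s)
        = \sum_(s : X | wt s == k) \sum_(x : X) (n%:R - 2 * k%:R).
  rewrite exchange_big /=; apply: eq_bigr => s /eqP hs.
  rewrite exchange_big /=; apply: eq_bigr => x _.
  by rewrite gsum homF.
rewrite e (eq_bigr (fun _ : X => (n%:R - 2 * k%:R) *+ 2 ^ n)); last first.
  by move=> s _; rewrite sumr_const card_X.
rewrite sum_const_wt sumr_const card_ord.
rewrite -[(n%:R - 2 * k%:R) *+ 2 ^ n]mulr_natr -[tau n k * _ *+ n]mulr_natr.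
have htn : tau n k * n%:R = - (('C(n,k))%:R * (k - (n - k))%N%:R).
  by rewrite /tau divfK // pnatr_eq0 -lt0n.
have hnk : n%:R - 2 * k%:R = - ((k - (n - k))%N%:R : rat).
  rewrite natrB; last lia.
  rewrite natrB; last lia.
  ring.
rewrite [X in _ - X]mulrAC htn hnk; ring.
Qed.

Lemma hat_zero (i : 'I_n) (u : X) : wt u != 1%N -> wt u != n.-1 -> hat (g i) u = 0.
Proof.
move=> h1 h2.
have nonneg : forall (i : 'I_n) (u : X), 0 <= hat (g i) u * hat (g i) u * (lam k u - tau n k).
  move=> i' u'; apply: mulr_ge0; first by rewrite -expr2 sqr_ge0.
  by rewrite subr_ge0; case: (lam_bounds hn hk hk1 hk2 u').
have hi := psumr_eq0P (fun i' _ => sumr_ge0 _ (fun u' _ => nonneg i' u')) total (i := i) isT.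
have hu := psumr_eq0P (fun u' _ => nonneg i u') hi (i := u) isT.
have [_ hlt] := lam_bounds hn hk hk1 hk2 u.
have hpos : 0 < lam k u - tau n k by rewrite subr_gt0 hlt.
move: hu => /eqP; rewrite mulf_eq0 (gt_eqF hpos) orbF mulf_eq0 orbb.
by move/eqP.
Qed.

Lemma even_val (x' : Hvert n) : ~~ odd (wt (val x')).
Proof. by case: x'. Qed.

Lemma iso (x' z' : Hvert n) : hdist (val (f x')) (val (f z')) = hdist (val x') (val z').
Proof.
set x := val x'.
pose h (z : X) := \sum_i g i x * g i z.
have hath : forall u, hat h u = \sum_i g i x * hat (g i) u.
  move=> u; rewrite /hat /h.
  rewrite (eq_bigr (fun y : X => \sum_i g i x * g i y * chi u y)); last first.
    by move=> y _; rewrite mulr_suml.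
  rewrite exchange_big /=; apply: eq_bigr => i _; rewrite mulr_sumr.
  by apply: eq_bigr => y _; rewrite mulrA.
have hath0 : forall u, wt u != 1%N -> wt u != n.-1 -> hat h u = 0.
  by move=> u h1 h2; rewrite hath big1 // => i _; rewrite hat_zero // mulr0.
have hn2 : (2 < n)%N by lia.
pose D (j : 'I_n) := (hat h (ev j) * chi (ev j) x
       + hat h (addv onesv (ev j)) * chi (addv onesv (ev j)) x) / (2 ^ n)%:R.
have h2n : (2 ^ n)%:R != 0 :> rat by rewrite pnatr_eq0 expn_eq0.
have hD : forall y : X, ~~ odd (wt y) -> h (addv x y) = \sum_j D j * chi (ev j) y.
  move=> y hy.
  apply: (mulfI h2n); rewrite -hat_inv.
  rewrite (bigID (fun u : X => wt u == 1%N)) /=.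
  rewrite [X in _ + X](bigID (fun u : X => wt u == n.-1)) /=.
  rewrite [X in _ + (_ + X)]big1 ?addr0; last first.
    by move=> u /andP [h1 h2]; rewrite hath0 ?mul0r.
  rewrite [X in _ + X](eq_bigl (fun u : X => wt u == n.-1)); last first.
    move=> u; have [->|hne] := eqVneq (wt u) n.-1; last by rewrite andbF.
    have hn1 : (n.-1 == 1%N) = false by apply/eqP; lia.
    by rewrite hn1.
  rewrite sum_wt1 sum_wtn1; last lia.
  rewrite -big_split mulr_sumr; apply: eq_bigr => j _.
  rewrite /D !chiD (chiDl onesv (ev j) y) [chi onesv y]chiC chi_ones -signr_odd (negbTE hy).
  rewrite expr0 mul1r.
  rewrite /=; field; exact: h2n.
have sumD : \sum_j D j = n%:R.
  rewrite (eq_bigr (fun j => D j * chi (ev j) zerov)); last by move=> j _; rewrite chi0 mulr1.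
  by rewrite -hD ?wt0 // addv0 /h gsum hdist_refl mulr0 subr0.
have sD : forall s : X, wt s = k -> \sum_j D j * chi (ev j) s = n%:R - 2 * k%:R.
  move=> s hs; rewrite -hD; last by rewrite hs.
  by rewrite /h gsum homF.
have hk0 : (0 < k)%N by lia.
have D1 := all_one hk0 hk2 sumD sD.
set z := val z'.
have hy : ~~ odd (wt (addv x z)).
  by rewrite odd_wtD (negbTE (even_val x')) (negbTE (even_val z')).
have := hD _ hy; rewrite addKv.
rewrite (eq_bigr (fun j => chi (ev j) (addv x z))); last by move=> j _; rewrite D1 mul1r.
rewrite sum_chi_ev /h gsum -hdistE /F !pival => e.
apply/eqP; rewrite -(eqr_nat rat); apply/eqP; lra.
Qed.

End Iso.

Local Close Scope ring_scope.

Theorem corollary4p6 (n k : nat) :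
  0 < n -> ~~ odd k -> n + 2 <= 2 * k -> k <= n - 1 ->
  is_core (@Hadj n k).
Proof.
move=> hn hk hk1 hk2 f hf.
have I := iso hn hk hk1 hk2 hf.
split.
  apply: injF_bij => x y e; apply: val_inj.
  have := I x y; rewrite e hdist_refl => /esym; rewrite hdistE => /wt_eq0 /eqP.
  by rewrite addv_eq0 => /eqP.
by move=> x y; rewrite /Hadj I.
Qed.
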